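(* Let $Y$ be a finite connected simple undirected graph with vertex set $\{1,\dots,n\}$, and let $\pi\in S_Y$. If $s,s'\in\{0,1,\dots,n-1\}$ with $s\neq s'$, then $[\boldsymbol{\sigma}_s(\pi)]_Y\neq[\boldsymbol{\sigma}_{s'}(\pi)]_Y$. Equivalently, for $g,g'\in C_n$ with $g\neq g'$ one has $[g\cdot\pi]_Y\neq[g'\cdot\pi]_Y$.
   Context: $S_Y$ denotes the set of permutations (total orders) $\pi=(\pi_1,\dots,\pi_n)$ of the vertex set of $Y$. The update graph $U(Y)$ has vertex set $S_Y$, two permutations being adjacent if they differ exactly by swapping two consecutive entries $\pi_k,\pi_{k+1}$ with $\{\pi_k,\pi_{k+1}\}$ not an edge of $Y$; $\pi\sim_Y\pi'$ iff $\pi,\pi'$ lie in the same connected component of $U(Y)$, and $[\pi]_Y$ denotes the class of $\pi$. Let $\sigma=(n,n-1,\dots,2,1)\in S_n$ (cycle notation) and $C_n=\langle\sigma\rangle$, acting on $S_Y$ by $g\cdot(\pi_1,\dots,\pi_n)=(\pi_{g^{-1}(1)},\dots,\pi_{g^{-1}(n)})$. Set $\boldsymbol{\sigma}_s(\pi)=\sigma^s\cdot\pi$; thus $\boldsymbol{\sigma}_1(\pi)=(\pi_2,\dots,\pi_n,\pi_1)$ is the cyclic left shift. *)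

(* Defs.v *)
From mathcomp Require Import all_boot all_fingroup.
Set Implicit Arguments. Unset Strict Implicit. Unset Printing Implicit Defensive.

(* Vertices of Y are 'I_n = {0,...,n-1} (0-indexed version of {1,...,n}). *)
Definition simple_graph n (e : rel 'I_n) := symmetric e /\ irreflexive e.
Definition connected_graph n (e : rel 'I_n) := forall x y, connect e x y.

(* A total order pi = (pi_1,...,pi_n) is a permutation p : {perm 'I_n}
   with p k = pi_(k+1) (position -> vertex). *)

Definition update_adj n (e : rel 'I_n) : rel {perm 'I_n} :=
  fun p q => [exists k : 'I_n, exists k' : 'I_n,
     [&& val k' == (val k).+1, ~~ e (p k) (p k') & q == (tperm k k' * p)%g]].

Definition upd_equiv n (e : rel 'I_n) (p q : {perm 'I_n}) : bool :=
  connect (update_adj e) p q.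

(* sigma = (n, n-1, ..., 2, 1) in cycle notation: k |-> k-1 (mod n),
   i.e. in 0-indexed form the cyclic predecessor ord_pred. *)
Definition sigma n : {perm 'I_n} := perm (@ord_pred_inj n).

(* The action g . (pi_1,...,pi_n) = (pi_{g^-1(1)}, ..., pi_{g^-1(n)}):
   as a position->vertex map this is p o g^-1, which is g^-1 * p in
   mathcomp's (left-to-right) composition convention. *)
Definition act_pos n (g p : {perm 'I_n}) : {perm 'I_n} := (g^-1 * p)%g.

Definition bsigma n (s : nat) (p : {perm 'I_n}) : {perm 'I_n} :=
  act_pos ((sigma n) ^+ s)%g p.

(* Main.v *)
Require Import Defs.
From mathcomp Require Import all_boot all_fingroup.
From mathcomp Require Import zify.

Lemma tperm_lt n (k k' i j : 'I_n) : val k' = (val k).+1 ->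
  ~ (val i = val k /\ val j = val k') -> ~ (val i = val k' /\ val j = val k) ->
  (i < j) = (tperm k k' i < tperm k k' j).
Proof.
move=> hk h1 h2.
have V (a b : 'I_n) : a <> b -> nat_of_ord a <> nat_of_ord b by move=> H /val_inj.
move: hk h1 h2 => /= hk h1 h2.
case: (tpermP k k' i) => [/(congr1 (@nat_of_ord n)) ei|/(congr1 (@nat_of_ord n)) ei|/V ni1 /V ni2];
case: (tpermP k k' j) => [/(congr1 (@nat_of_ord n)) ej|/(congr1 (@nat_of_ord n)) ej|/V nj1 /V nj2];
 lia.
Qed.

Lemma inv_step {n} {e : rel 'I_n} (se : simple_graph e) {u v} (huv : e u v)
  (p q : {perm 'I_n}) : update_adj e p q ->
  ((p^-1)%g u < (p^-1)%g v) = ((q^-1)%g u < (q^-1)%g v).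
Proof.
case/existsP => k /existsP [k' /and3P [/eqP hk' hne /eqP ->]].
rewrite invMg tpermV !permM.
apply: tperm_lt => //.
- case=> /val_inj hi /val_inj hj; move: hne.
  by rewrite -hi -hj !permKV huv.
- case=> /val_inj hi /val_inj hj; move: hne.
  by rewrite -hi -hj !permKV (proj1 se) huv.
Qed.

Lemma inv_connect {n} {e : rel 'I_n} (se : simple_graph e) {u v} (huv : e u v)
  (p q : {perm 'I_n}) : connect (update_adj e) p q ->
  ((p^-1)%g u < (p^-1)%g v) = ((q^-1)%g u < (q^-1)%g v).
Proof.
move=> c.
have cl : closed (update_adj e) [pred r : {perm 'I_n} | (r^-1)%g u < (r^-1)%g v].
  by move=> x y /(inv_step se huv).
exact: (closed_connect cl c).
Qed.

Lemma crossing {n} {e : rel 'I_n} (se : simple_graph e) (ce : connected_graph e)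
  {a : pred 'I_n} {x y} : a x -> ~~ a y -> exists u v, [&& e u v, a u & ~~ a v].
Proof.
move=> ax ay.
case: (boolP [exists u, exists v, [&& e u v, a u & ~~ a v]]).
  by case/existsP => u /existsP [v h]; exists u, v.
move=> hn.
have cl : closed e a.
  move=> u w euw; change (a u = a w).
  case au: (a u); case aw: (a w) => //.
  - case/negP: hn; apply/existsP; exists u; apply/existsP; exists w.
    by rewrite euw au aw.
  - case/negP: hn; apply/existsP; exists w; apply/existsP; exists u.
    by rewrite (proj1 se) euw au aw.
have := closed_connect cl (ce x y).
by rewrite -!topredE /= ax (negbTE ay).
Qed.

Lemma sigma_pos n k (x : 'I_n) :
  val (((sigma n) ^+ k)%g x) = (x + k * (n - 1)) %% n.
Proof.
have n0 : 0 < n by case: x => /= m; case: n => //.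
elim: k => [|k IH].
  by rewrite expg0 perm1 mul0n addn0 modn_small.
rewrite expgSr permM /sigma permE /= IH.
have -> : ((x + k * (n - 1)) %% n + n).-1 = (x + k * (n - 1)) %% n + (n - 1).
  by lia.
by rewrite modnDml mulSn; congr (_ %% _); lia.
Qed.

Lemma bsigma_inv n s (p : {perm 'I_n}) v :
  ((bsigma s p)^-1)%g v = ((sigma n) ^+ s)%g ((p^-1)%g v).
Proof. by rewrite /bsigma /act_pos invMg invgK permM. Qed.

Lemma key {n} {e : rel 'I_n} (se : simple_graph e) (ce : connected_graph e)
  (q1 q2 : {perm 'I_n}) c : 0 < c < n ->
  (forall v, val ((q2^-1)%g v) = ((q1^-1)%g v + c) %% n) ->
  exists u v, e u v && (((q1^-1)%g u < (q1^-1)%g v) != ((q2^-1)%g u < (q2^-1)%g v)).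
Proof.
move=> /andP [c0 cn] hq.
have n0 : 0 < n by lia.
have n1 : n.-1 < n by lia.
pose a := [pred v | (q1^-1)%g v + c < n].
have ax : a (q1 (Ordinal n0)) by rewrite /= permK /=.
have ay : ~~ a (q1 (Ordinal n1)) by rewrite /= permK /= -leqNgt; lia.
have [u [v /and3P [euv au av]]] := crossing se ce ax ay.
exists u, v; rewrite euv /= !hq.
move: au av; rewrite /= -leqNgt => au av.
have hu : ((q1^-1)%g u + c) %% n = (q1^-1)%g u + c by rewrite modn_small.
have hv : ((q1^-1)%g v + c) %% n = (q1^-1)%g v + c - n.
  rewrite -{1}(subnK av) modnDr modn_small //.
  have := ltn_ord ((q1^-1)%g v); lia.
rewrite hu hv.
have -> : (q1^-1)%g u < (q1^-1)%g v by lia.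
have := ltn_ord ((q1^-1)%g v) => hb.
have -> : (q1^-1)%g u + c < (q1^-1)%g v + c - n = false by lia.
by [].
Qed.

Lemma arith X n s s' : s < s' -> s' < n ->
  X + s' * (n - 1) = (X + s * (n - 1) + (n - (s' - s))) + (s' - s - 1) * n.
Proof.
move=> hs hs'.
have [d ed] : exists d, s' = s + d.+1 by exists (s' - s).-1; lia.
have [m Hm] : exists m, n = m.+1 by exists n.-1; lia.
subst n s'. have hd : d <= m by lia.
have -> : s + d.+1 - s - 1 = d by lia.
have -> : m.+1 - 1 = m by lia.
have -> : m.+1 - (s + d.+1 - s) = m - d by lia.
nia.
Qed.

Lemma part1 {n} {e : rel 'I_n} (se : simple_graph e) (ce : connected_graph e)
  (p : {perm 'I_n}) s s' : s < s' < n ->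
  exists u v, e u v && ((((bsigma s p)^-1)%g u < ((bsigma s p)^-1)%g v)
                        != (((bsigma s' p)^-1)%g u < ((bsigma s' p)^-1)%g v)).
Proof.
move=> /andP [hs hs'].
apply: (@key n e se ce _ _ (n - (s' - s))); first by lia.
move=> v; rewrite !bsigma_inv !sigma_pos modnDml.
set X := (p^-1)%g v : nat.
have -> : X + s' * (n - 1) = (X + s * (n - 1) + (n - (s' - s))) + (s' - s - 1) * n.
  exact: arith.
by rewrite [_ + _ * n]addnC modnMDl.
Qed.

Theorem proposition1 (n : nat) (e : rel 'I_n) :
  simple_graph e -> connected_graph e ->
  forall p : {perm 'I_n},
    (forall s s' : nat, s < n -> s' < n -> s != s' ->
       ~~ upd_equiv e (bsigma s p) (bsigma s' p)) /\
    (forall g g' : {perm 'I_n}, g \in <[sigma n]>%g -> g' \in <[sigma n]>%g ->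
       g != g' -> ~~ upd_equiv e (act_pos g p) (act_pos g' p)).
Proof.
move=> se ce p.
have H1 : forall s s', s < n -> s' < n -> s != s' ->
    ~~ upd_equiv e (bsigma s p) (bsigma s' p).
  move=> s s' hs hs' hne; apply/negP => C.
  have [u [v /andP [euv hneq]]] : exists u v, e u v &&
     ((((bsigma s p)^-1)%g u < ((bsigma s p)^-1)%g v)
       != (((bsigma s' p)^-1)%g u < ((bsigma s' p)^-1)%g v)).
    case: (ltngtP s s') => h.
    - by apply: part1 => //; rewrite h hs'.
    - have [u [v /andP [a b]]] := part1 se ce p s' s ltac:(by rewrite h hs).
      by exists u, v; rewrite a eq_sym.
    - by rewrite h eqxx in hne.
  by move: hneq; rewrite (inv_connect se euv _ _ C) eqxx.
split => //.
move=> g g' /cycleP [i ->] /cycleP [j ->] hne.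
case: (posnP n) => n0.
  rewrite (_ : (sigma n ^+ i)%g = (sigma n ^+ j)%g) ?eqxx in hne => //.
  by apply/permP => -[m]; rewrite n0.
have sn : ((sigma n) ^+ n)%g = 1%g.
  apply/permP => x; apply/val_inj; rewrite sigma_pos perm1 mulnC addnC modnMDl modn_small //.
have red k : ((sigma n) ^+ k)%g = ((sigma n) ^+ (k %% n))%g.
  by rewrite {1}(divn_eq k n) expgD mulnC expgM sn expg1n mul1g.
rewrite (red i) (red j) in hne *.
apply: H1; rewrite ?ltn_pmod //.
by apply: contraNneq hne => ->.
Qed.
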